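(* Let $p$ be a prime and $G$ a non-abelian group of order $p^m$ with $|Z(G)|=p^{m-2}$. Then $\mathrm{Spec}(\Gamma_G)=\{[0]^{(p+1)((p-1)p^{m-3}-1)},[-(p-1)p^{m-3}]^{p},[(p-1)p^{m-2}]^1\}$, $\mathrm{L\text{-}Spec}(\Gamma_G)=\{[0]^1,[(p-1)p^{m-2}]^{(p+1)((p-1)p^{m-3}-1)},[(p^2-1)p^{m-3}]^{p}\}$, $\mathrm{Q\text{-}Spec}(\Gamma_G)=\{[(p-1)p^{m-2}]^{(p+1)((p-1)p^{m-3}-1)},[(p-1)^2p^{m-3}]^{p},[2(p-1)p^{m-2}]^1\}$, and $E(\Gamma_G)=LE(\Gamma_G)=SE(\Gamma_G)=2(p-1)p^{m-2}$.
   Context: For a finite non-abelian group $G$ with center $Z(G)$ and $x\in G$, $x^G$ is the conjugacy class of $x$. The NCCC-graph $\Gamma_G$ is the simple graph with vertex set $\{x^G: x\in G\setminus Z(G)\}$, distinct vertices $x^G,y^G$ adjacent iff $x'y'\neq y'x'$ for all $x'\in x^G,y'\in y^G$. For a simple graph with adjacency matrix $A$, degree matrix $D$, $L=D-A$, $Q=D+A$; Spec, L-Spec, Q-Spec are the eigenvalue multisets of $A,L,Q$, written with $[\lambda]^k$ meaning eigenvalue $\lambda$ of multiplicity $k$. $E=\sum_{\lambda\in\mathrm{Spec}}|\lambda|$; with $\Delta=2|E(\mathcal G)|/|V(\mathcal G)|$, $LE=\sum_{\beta\in\mathrm{L\text{-}Spec}}|\beta-\Delta|$, $SE=\sum_{\gamma\in\mathrm{Q\text{-}Spec}}|\gamma-\Delta|$.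 *)

(* Defs.v *)
From HB Require Import structures.
From mathcomp Require Import all_boot all_order all_algebra all_fingroup all_solvable all_field.
Set Implicit Arguments. Unset Strict Implicit. Unset Printing Implicit Defensive.
Import Order.TTheory GRing.Theory Num.Theory.
Local Open Scope ring_scope.

Section NCCC.
Variable gT : finGroupType.
Variable G : {group gT}.

Definition nccc_vertices : {set {set gT}} :=
  ([set x ^: G | x in G :\: 'Z(G)])%g.

Definition nccc_adj (C D : {set gT}) : bool :=
  (C != D) && [forall x in C, forall y in D, (x * y)%g != (y * x)%g].

Definition nccc_n := #|nccc_vertices|.

Definition nccc_A : 'M[algC]_nccc_n :=
  \matrix_(i, j) (nccc_adj (enum_val i) (enum_val j))%:R.

Definition nccc_D : 'M[algC]_nccc_n :=
  diag_mx (\row_i \sum_j nccc_A i j).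

Definition nccc_L : 'M[algC]_nccc_n := nccc_D - nccc_A.
Definition nccc_Q : 'M[algC]_nccc_n := nccc_D + nccc_A.

(* Delta = 2|E|/|V| (sum of degrees = 2|E|) *)
Definition nccc_Delta : algC :=
  (\sum_i \sum_j nccc_A i j) / nccc_n%:R.
End NCCC.

(* s is the multiset of eigenvalues of M (roots of the characteristic
   polynomial, counted with multiplicity) *)
Definition is_spectrum (n : nat) (M : 'M[algC]_n) (s : seq algC) : Prop :=
  char_poly M = \prod_(l <- s) ('X - l%:P).

(* [l]^k written as nseq k l *)

(* Main.v *)
Require Import Defs.
From HB Require Import structures.
From mathcomp Require Import all_boot all_order all_algebra all_fingroup all_solvable all_field.
From mathcomp Require Import ring zify.
Import Order.TTheory GRing.Theory Num.Theory.
Set Implicit Arguments. Unset Strict Implicit. Unset Printing Implicit Defensive.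

Section Grp.
Local Open Scope group_scope.
Variables (gT : finGroupType) (G : {group gT}) (p m : nat).
Hypotheses (pr : prime p) (cG : #|G| = (p ^ m)%N) (nab : ~~ abelian G)
  (cZ : #|'Z(G)| = (p ^ (m - 2))%N).

Lemma p_gt1 : (1 < p)%N. Proof. exact: prime_gt1. Qed.

Lemma cardS_pow (K : {group gT}) : K \subset G -> exists2 e, (e <= m)%N & #|K| = (p ^ e)%N.
Proof. by move=> sKG; apply/(dvdn_pfactor _ _ pr); rewrite -cG cardSg. Qed.

Lemma m_gt2 : (2 < m)%N.
Proof.
rewrite ltnNge; apply/negP => hm; move/negP: nab; apply.
apply: (p2group_abelian (p := p)); first by rewrite /pgroup cG pnatX pnat_id.
by rewrite cG pfactorK.
Qed.

Lemma big_card (K : {group gT}) : 'Z(G) \proper K -> K \subset G -> (p ^ (m - 1) <= #|K|)%N.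
Proof.
move=> pZK sKG; have [e le cK] := cardS_pow sKG.
have sZK := proper_sub pZK.
have := cardSg sZK; rewrite cZ cK dvdn_Pexp2l ?p_gt1 // => hle.
have := proper_card pZK; rewrite cZ cK ltn_exp2l ?p_gt1 // => hlt.
by rewrite leq_exp2l ?p_gt1 //; lia.
Qed.

Lemma small_card (K : {group gT}) : K \proper G -> (#|K| <= p ^ (m - 1))%N.
Proof.
move=> pKG; have [e le cK] := cardS_pow (proper_sub pKG).
have := proper_card pKG; rewrite cG cK ltn_exp2l ?p_gt1 // => hlt.
by rewrite leq_exp2l ?p_gt1 //; lia.
Qed.

Definition ncz := G :\: 'Z(G).

Lemma Z_sub_cent x : x \in G -> 'Z(G) \subset 'C_G[x].
Proof.
move=> xG; apply/subsetP => z /centerP [zG cz]; apply/subcent1P; split => //.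
by apply/commute_sym; apply: cz.
Qed.

Lemma card_cent x : x \in ncz -> #|'C_G[x]| = (p ^ (m - 1))%N.
Proof.
case/setDP => xG xZ; apply/eqP; rewrite eqn_leq; apply/andP; split.
  apply: small_card; rewrite properEneq subcent1_sub andbT.
  apply/eqP => eCG; move/negP: xZ; apply; apply/centerP; split => // y yG.
  have : y \in 'C_G[x] by rewrite eCG.
  by case/subcent1P.
apply: big_card; last exact: subcent1_sub.
rewrite properEneq Z_sub_cent // andbT; apply/eqP => eZ.
by move: xZ; rewrite eZ subcent1_id.
Qed.

Lemma comm_cent x y : x \in ncz -> y \in ncz -> commute x y -> 'C_G[x] = 'C_G[y].
Proof.
have key u v : u \in ncz -> v \in ncz -> commute u v -> 'C_G[u] \subset 'C_G[v].
  move=> un vn cuv; set K := ('C_G[u] :&: 'C_G[v])%G.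
  have sK : K \subset 'C_G[u] := subsetIl _ _.
  move: (un) (vn) => /setDP [uG uZ] /setDP [vG vZ].
  have uK : u \in K.
    rewrite inE subcent1_id //=; apply/subcent1P; split => //.
  have pZK : 'Z(G) \proper K.
    rewrite properEneq subsetI !Z_sub_cent // !andbT; apply/eqP => eZ.
    by move: uZ; rewrite eZ uK.
  have hK := big_card pZK (subset_trans sK (subcent1_sub _ _)).
  have eK : K :=: 'C_G[u].
    apply/eqP; rewrite eqEcard sK card_cent //.
  by rewrite -eK subsetIr.
move=> xn yn cxy; apply/eqP; rewrite eqEcard key //= !card_cent //.
Qed.

Lemma cent_comm x y : 'C_G[x] = 'C_G[y] -> x \in G -> commute x y.
Proof.
move=> e xG; have : x \in 'C_G[y] by rewrite -e subcent1_id.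
by case/subcent1P => _ /commute_sym.
Qed.

Lemma der_sub_Z : [~: G, G] \subset 'Z(G).
Proof.
rewrite -derg1; apply: der1_min; first exact: normal_norm (center_normal G).
apply: (card_p2group_abelian pr).
rewrite card_quotient ?(normal_norm (center_normal G)) // -divgS ?center_sub //.
rewrite cG cZ -expnB ?prime_gt0 //; [congr (_ ^ _)%N | ]; have := m_gt2; lia.
Qed.

Lemma conj_comm x g : x \in ncz -> g \in G -> x ^ g \in ncz /\ commute x (x ^ g).
Proof.
move=> /setDP [xG xZ] gG; split.
  rewrite inE (groupJ xG gG) andbT memJ_norm ?xZ //.
  exact: (subsetP (normal_norm (center_normal G))).
have zZ : [~ x, g] \in 'Z(G) by apply: (subsetP der_sub_Z); apply: mem_commg.
rewrite conjg_mulR; apply: commuteM => //.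
by move/centerP: zZ => [_ cz]; apply/commute_sym; apply: cz.
Qed.

Lemma class_cent x y : x \in ncz -> y \in x ^: G -> y \in ncz /\ 'C_G[y] = 'C_G[x].
Proof.
move=> xn /imsetP [g gG ->]; have [yn c] := conj_comm xn gG; split => //.
by apply: esym; apply: comm_cent.
Qed.

Lemma card_class x : x \in ncz -> #|x ^: G| = p.
Proof.
move=> xn; rewrite -index_cent1 -divgS ?subcent1_sub // card_cent // cG.
rewrite -expnB ?prime_gt0 //; last lia.
have hm := m_gt2; have -> : (m - (m - 1) = 1)%N by lia.
by rewrite expn1.
Qed.

Definition Fc (C : {set gT}) := 'C_G[repr C].

Lemma F_class x : x \in ncz -> Fc (x ^: G) = 'C_G[x].
Proof.
move=> xn; have := mem_repr _ (class_refl G x).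
by case/(class_cent xn).
Qed.

Lemma vertP C : C \in nccc_vertices G -> exists2 x, x \in ncz & C = x ^: G.
Proof. by case/imsetP => x xn ->; exists x. Qed.

Lemma adjE C D : C \in nccc_vertices G -> D \in nccc_vertices G ->
  nccc_adj C D = (Fc C != Fc D).
Proof.
move=> /vertP [x xn ->] /vertP [y yn ->]; rewrite /nccc_adj !F_class //.
have xG : x \in G by case/setDP: xn.
have [e|ne] := eqVneq 'C_G[x] 'C_G[y].
  apply/negbTE; rewrite negb_and; apply/orP; right; apply/negP => /forallP H.
  move: (H x); rewrite class_refl /= => /forallP /(_ y); rewrite class_refl /=.
  by move/eqP; apply; apply: cent_comm.
apply/andP; split.
  apply/eqP => eCD; move/eqP: ne; apply; by rewrite -!F_class // eCD.
apply/forallP => x'; apply/implyP => x'C; apply/forallP => y'; apply/implyP => y'D.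
apply/eqP => c; have [x'n ex] := class_cent xn x'C; have [y'n ey] := class_cent yn y'D.
by move/eqP: ne; apply; rewrite -ex -ey; apply: comm_cent.
Qed.

Lemma count_classes (S : {set gT}) : S \subset ncz ->
  (forall x g, x \in S -> g \in G -> x ^ g \in S) ->
  #|S| = (p * #|[set x ^: G | x in S]|)%N.
Proof.
move=> sS cS.
have acts : [acts G, on S | 'J].
  apply/actsP => g gG x /=; apply/idP/idP => [h|]; last by move=> xS; apply: cS.
  by rewrite -(conjgK g x); apply: cS => //; rewrite groupV.
have P := orbit_partition acts.
have -> : [set x ^: G | x in S] = orbit 'J G @: S by apply: eq_imset => x.
rewrite (card_partition P) mulnC -sum_nat_const.
apply: eq_bigr => C /imsetP [x xS ->]; rewrite orbitJ card_class //.
exact: (subsetP sS).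
Qed.

Lemma card_V : (p * #|nccc_vertices G|)%N = (p ^ m - p ^ (m - 2))%N.
Proof.
rewrite /nccc_vertices -/ncz -count_classes //.
- by rewrite /ncz cardsDS ?center_sub // cG cZ.
- by move=> x g xn gG; have [] := conj_comm xn gG.
Qed.

Lemma card_part x0 : x0 \in ncz ->
  (p * #|[set C in nccc_vertices G | Fc C == ('C_G[x0])%g]|)%N = (p ^ (m - 1) - p ^ (m - 2))%N.
Proof.
move=> x0n; set H := ('C_G[x0])%g; set S := [set x in ncz | 'C_G[x] == H].
have eS : S = H :\: 'Z(G).
  apply/setP => x; apply/idP/idP.
    rewrite in_set => /andP [xn /eqP e]; have [xG xZ] := setDP xn.
    by rewrite in_setD xZ -e subcent1_id.
  rewrite in_setD => /andP [xZ xH].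
  have xG := subsetP (subcent1_sub x0 G) x xH.
  have xn : x \in ncz by rewrite /ncz in_setD xZ xG.
  rewrite in_set xn /=; apply/eqP; apply: esym; apply: comm_cent => //.
  by case/subcent1P: xH.
have -> : [set C in nccc_vertices G | Fc C == H] = [set x ^: G | x in S].
  apply/setP => C; rewrite in_set; apply/andP/imsetP => [[/vertP [x xn ->] e]|[x xS ->]].
    by exists x => //; rewrite in_set xn -F_class.
  move: xS; rewrite in_set => /andP [xn e]; split; first exact: imset_f.
  by rewrite F_class.
rewrite -count_classes.
- by rewrite eS cardsDS ?Z_sub_cent ?card_cent // ?cZ; case/setDP: x0n.
- by apply/subsetP => x; rewrite in_set => /andP [].
- move=> x g; rewrite in_set => /andP [xn e] gG.
  have [yn c] := conj_comm xn gG; rewrite in_set yn /=.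
  by rewrite -(comm_cent xn yn c).
Qed.
End Grp.

Local Open Scope ring_scope.

Lemma char_poly_conj n (P M : 'M[algC]_n) : P \in unitmx ->
  char_poly (invmx P *m M *m P) = char_poly M.
Proof.
move=> Pu; rewrite /char_poly /char_poly_mx.
set Pp := map_mx (@polyC _) P; set Pi := map_mx (@polyC _) (invmx P).
have PiPp : Pi *m Pp = 1%:M by rewrite -map_mxM mulVmx // map_mx1.
have -> : 'X%:M - map_mx (@polyC _) (invmx P *m M *m P) =
   Pi *m ('X%:M - map_mx (@polyC _) M) *m Pp.
  rewrite !map_mxM -/Pp -/Pi mulmxBr mulmxBl; congr (_ - _).
  by rewrite -mulmxA -scalar_mxC mulmxA PiPp mul1mx.
rewrite !det_mulmx mulrAC -det_mulmx PiPp det1 mul1r.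
by [].
Qed.

Lemma sum_bool_card N (P : 'I_N -> bool) :
  (\sum_(i < N) (P i : nat))%N = #|[pred i | P i]|.
Proof. by rewrite -sum1_card [RHS]big_mkcond; apply: eq_bigr => i _; rewrite inE; case: (P i). Qed.

Lemma sumR_bool_card N (P : 'I_N -> bool) :
  \sum_(i < N) ((P i)%:R : algC) = (#|[pred i | P i]|)%:R.
Proof. by rewrite -sum_bool_card natr_sum. Qed.

Lemma prod_split3 N (d : 'I_N -> algC) (x y z : algC) (g : algC -> algC) :
  (forall i, d i \in [:: x; y; z]) -> x != y -> x != z -> y != z ->
  \prod_(i < N) ('X - (g (d i))%:P) =
  ('X - (g x)%:P) ^+ #|[pred i | d i == x]| * ('X - (g y)%:P) ^+ #|[pred i | d i == y]|
  * ('X - (g z)%:P) ^+ #|[pred i | d i == z]|.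
Proof.
move=> H xy xz yz; rewrite -!sum_bool_card -!prodrXr -!big_split /=.
apply: eq_bigr => i _; move: (H i); rewrite !inE => /or3P [] /eqP ->.
- by rewrite eqxx (negbTE xy) (negbTE xz) expr1 !expr0 !mulr1.
- by rewrite eqxx eq_sym (negbTE xy) (negbTE yz) expr1 !expr0 mulr1 mul1r.
- by rewrite eqxx eq_sym (negbTE xz) eq_sym (negbTE yz) expr1 !expr0 !mul1r.
Qed.

Section Multi.
Variables (T : eqType) (n' : nat) (f : 'I_n'.+1 -> T) (s p : nat).
Local Notation n := n'.+1.
Hypothesis hs : forall i, (\sum_(j < n) (f j == f i))%N = s.
Hypothesis hn : n = (p.+1 * s)%N.
Hypotheses (s0 : (0 < s)%N) (p0 : (0 < p)%N).

Definition Am : 'M[algC]_n := \matrix_(i, j) (f i != f j)%:R.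
Definition Jm : 'M[algC]_n := const_mx 1.
Definition Pm : 'M[algC]_n := \matrix_(i, j) (f i == f j)%:R.

Let sR : algC := s%:R.
Let nR : algC := n%:R.

Lemma hsR i : \sum_(j < n) ((f j == f i)%:R : algC) = sR.
Proof. by rewrite /sR -(hs i) natr_sum. Qed.

Lemma AmE : Am = Jm - Pm.
Proof. apply/matrixP => i j; rewrite /Am /Jm /Pm !mxE; case: eqP => _ /=; by rewrite ?subrr ?subr0. Qed.

Lemma PP : Pm *m Pm = sR *: Pm.
Proof.
apply/matrixP => i j; rewrite /Pm !mxE.
have [eij|nij] := eqVneq (f i) (f j).
  rewrite mulr1 -(hsR j); apply: eq_bigr => k _; rewrite !mxE eij.
  by rewrite [f j == _]eq_sym; case: eqP; rewrite ?mulr1 ?mulr0.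
rewrite mulr0 big1 // => k _; rewrite !mxE.
have [eik|] := eqVneq (f i) (f k); last by rewrite mul0r.
by rewrite -eik (negbTE nij) mulr0.
Qed.

Lemma JP : Jm *m Pm = sR *: Jm.
Proof.
apply/matrixP => i j; rewrite /Jm /Pm !mxE mulr1 -(hsR j).
by apply: eq_bigr => k _; rewrite !mxE mul1r.
Qed.

Lemma PJ : Pm *m Jm = sR *: Jm.
Proof.
apply/matrixP => i j; rewrite /Jm /Pm !mxE mulr1 -(hsR i).
by apply: eq_bigr => k _; rewrite !mxE mulr1 eq_sym.
Qed.

Lemma JJ : Jm *m Jm = nR *: Jm.
Proof.
apply/matrixP => i j; rewrite /Jm !mxE mulr1 /nR.
rewrite (eq_bigr (fun _ => 1)); last by move=> k _; rewrite !mxE mulr1.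
by rewrite sumr_const card_ord.
Qed.

Lemma A2 : Am *m Am = (nR - 2 * sR) *: Jm + sR *: Pm.
Proof.
rewrite AmE mulmxBl !mulmxBr JJ JP PJ PP.
by apply/matrixP => i j; rewrite !mxE; ring.
Qed.


Let bR : algC := (p * s)%:R.
Lemma nRE : nR = (p.+1)%:R * sR.
Proof. by rewrite /nR hn natrM. Qed.
Lemma bRE : bR = p%:R * sR.
Proof. by rewrite /bR natrM. Qed.

Lemma qA : Am *m (Am + sR%:M) *m (Am - bR%:M) = 0.
Proof.
rewrite [Am *m (_ + _)]mulmxDr mul_mx_scalar A2 AmE.
rewrite !mulmxDl !mulmxBr -!scalemxAl JJ JP PJ PP !mulmxBl JJ JP PJ PP !mul_mx_scalar.
apply/matrixP => i j; rewrite !mxE nRE bRE; ring.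
Qed.

Let rs := [:: 0; - sR; bR].

Lemma hornerA : horner_mx Am (\prod_(x <- rs) ('X - x%:P)) = 0.
Proof.
rewrite !big_cons big_nil !rmorphM /= !rmorphB /= horner_mx_X !horner_mx_C mulr1.
by rewrite raddf0 raddfN /= subr0 opprK mulrA; exact: qA.
Qed.


Lemma sR_neq0 : sR != 0. Proof. by rewrite /sR pnatr_eq0 -lt0n. Qed.
Lemma bR_neq0 : bR != 0. Proof. by rewrite /bR pnatr_eq0 -lt0n muln_gt0 p0 s0. Qed.
Lemma d01 : (0 : algC) != - sR. Proof. by rewrite eq_sym oppr_eq0 sR_neq0. Qed.
Lemma d02 : (0 : algC) != bR. Proof. by rewrite eq_sym bR_neq0. Qed.
Lemma d12 : - sR != bR.
Proof.
rewrite eq_sym -subr_eq0 opprK /bR /sR -natrD pnatr_eq0 -lt0n addn_gt0 s0 orbT //.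
Qed.

Lemma Am_diag : exists P : 'M[algC]_n, exists d : 'rV[algC]_n,
  P \in unitmx /\ Am = invmx P *m diag_mx d *m P.
Proof.
have : diagonalizable Am.
  apply/diagonalizableP; exists rs; last by apply: mxminpoly_min; exact: hornerA.
  by rewrite /rs /= !inE negb_or d01 d02 d12.
case=> P Pu /(diagonalizable_forLR Pu) [d Ad]; exists P, d; split => //.
by rewrite Ad mxpoly.conjumx ?unitmx_inv // invmxK.
Qed.


Lemma Am_char_gen : exists d : 'I_n -> algC,
  [/\ forall c e, char_poly (c%:M + e *: Am) = \prod_(i < n) ('X - (c + e * d i)%:P),
     forall i, d i \in rs,
     \sum_i d i = 0 & \sum_i d i ^+ 2 = nR * (nR - sR)].
Proof.
have [P [d [Pu Ad]]] := Am_diag.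
exists (fun i => d 0 i); split.
- move=> c e.
  have E : c%:M + e *: Am = invmx P *m diag_mx (\row_i (c + e * d 0 i)) *m P.
    have -> : diag_mx (\row_i (c + e * d 0 i)) = c%:M + e *: diag_mx d.
      apply/matrixP=> i j; rewrite !mxE.
      by have [->|_] := eqVneq i j; rewrite ?mulr1n ?mulr0n ?mulr0 ?addr0.
    rewrite Ad mulmxDr mulmxDl -scalemxAr -scalemxAl mul_mx_scalar -scalemxAl.
    by rewrite mulVmx // scalemx1.
  rewrite E char_poly_conj // char_poly_trig ?diag_mx_is_trig //.
  by apply: eq_bigr => i _; rewrite !mxE eqxx mulr1n.
- move=> i.
  have H := hornerA; rewrite Ad horner_mx_uconjC // in H.
  have H2 : horner_mx (diag_mx d) (\prod_(x <- rs) ('X - x%:P)) = 0.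
    set X := horner_mx _ _ in H *.
    have -> : X = P *m (invmx P *m X *m P) *m invmx P.
      by rewrite !mulmxA mulmxV // mul1mx -mulmxA mulmxV // mulmx1.
    by rewrite H mulmx0 mul0mx.
  have := congr1 (fun M : 'M[algC]_n => M i i) H2; rewrite horner_mx_diag !mxE eqxx mulr1n.
  by move=> /eqP; rewrite -root_prod_XsubC.
- have T1 : \tr Am = \sum_j d 0 j.
    by rewrite Ad mxtrace_mulC mulmxA mulmxV // mul1mx mxtrace_diag.
  rewrite -T1 /mxtrace big1 // => i _; by rewrite /Am mxE; case: eqP.
- have AA : Am *m Am = invmx P *m (diag_mx d *m diag_mx d) *m P.
    rewrite Ad !mulmxA; congr (_ *m _).
    by rewrite -[invmx P *m diag_mx d *m P *m invmx P]mulmxA mulmxV // mulmx1.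
  have T2 : \tr (Am *m Am) = \sum_j d 0 j ^+ 2.
    rewrite AA mxtrace_mulC mulmxA mulmxV // mul1mx mulmx_diag mxtrace_diag.
    by apply: eq_bigr => j _; rewrite mxE expr2.
  rewrite -T2 A2 mxtraceD !mxtraceZ.
  have -> : \tr Jm = nR.
    rewrite /mxtrace (eq_bigr (fun _ => 1)) ?sumr_const ?card_ord // => i _.
    by rewrite /Jm mxE.
  have -> : \tr Pm = nR.
    rewrite /mxtrace (eq_bigr (fun _ => 1)) ?sumr_const ?card_ord // => i _.
    by rewrite /Pm mxE eqxx.
  ring.
Qed.


Lemma Am_char (c e : algC) : char_poly (c%:M + e *: Am) =
  ('X - (c + e * 0)%:P) ^+ (n - p.+1) * ('X - (c + e * - sR)%:P) ^+ p
  * ('X - (c + e * bR)%:P) ^+ 1.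
Proof.
have [d [Hc Hd S1 S2]] := Am_char_gen.
rewrite Hc (prod_split3 (fun x => c + e * x) Hd d01 d02 d12).
set c0 := #|[pred i | d i == 0]|; set c1 := #|[pred i | d i == - sR]|.
set c2 := #|[pred i | d i == bR]|.
have pt i : [/\ d i = - sR * (d i == - sR)%:R + bR * (d i == bR)%:R,
    d i ^+ 2 = sR ^+ 2 * (d i == - sR)%:R + bR ^+ 2 * (d i == bR)%:R &
    addn (addn (d i == 0) (d i == - sR)) (d i == bR) = 1%N].
  have e01 := negbTE d01; have e02 := negbTE d02; have e12 := negbTE d12.
  have e10 : (- sR == 0) = false by rewrite eq_sym.
  have e20 : (bR == 0) = false by rewrite eq_sym.
  have e21 : (bR == - sR) = false by rewrite eq_sym.
  move: (Hd i); rewrite !inE => /or3P [] /eqP ->;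
    rewrite ?eqxx ?e01 ?e02 ?e12 ?e10 ?e20 ?e21 ?mulr0 ?mulr1 ?addr0 ?add0r //.
  - by rewrite expr2 mulr0.
  - by rewrite sqrrN.
have E1 : \sum_i d i = - sR * c1%:R + bR * c2%:R.
  rewrite -!sumR_bool_card !mulr_sumr -big_split; apply: eq_bigr => i _.
  by case: (pt i).
have E2 : \sum_i d i ^+ 2 = sR ^+ 2 * c1%:R + bR ^+ 2 * c2%:R.
  rewrite -!sumR_bool_card !mulr_sumr -big_split; apply: eq_bigr => i _.
  by case: (pt i).
have E0 : (c0 + c1 + c2)%N = n.
  rewrite /c0 /c1 /c2 -!sum_bool_card -!big_split -[RHS](card_ord n) -sum1_card.
  by apply: eq_bigr => i _; case: (pt i).
have h1 : (s * c1)%N = (p * s * c2)%N.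
  move/eqP: S1; rewrite E1 addrC mulNr subr_eq0 /bR /sR -!natrM eqr_nat => /eqP.
  by move=> ->.
have h2 : (s * s * c1 + p * s * (p * s) * c2)%N = (n * (p * s))%N.
  have nsb : nR - sR = bR by rewrite nRE bRE; ring.
  move: S2; rewrite E2 nsb /bR /sR /nR !expr2 -!natrM -natrD => /eqP; rewrite eqr_nat.
  by move=> /eqP.
have hc1 : c1 = (p * c2)%N by nia.
have hc2 : c2 = 1%N by nia.
have hc0 : c0 = (n - p.+1)%N by rewrite hc1 hc2 in E0; lia.
by rewrite hc0 hc1 hc2 muln1.
Qed.


Lemma rowsum i : \sum_j Am i j = bR.
Proof.
rewrite (eq_bigr (fun j => 1 - (f j == f i)%:R)); last first.
  by move=> j _; rewrite /Am mxE eq_sym; case: eqP; rewrite ?subr0 ?subrr.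
rewrite sumrB sumr_const card_ord hsR -/nR nRE bRE; ring.
Qed.

End Multi.

Lemma multi_all (T : eqType) n (f : 'I_n -> T) s p :
  (forall i, (\sum_(j < n) (f j == f i))%N = s) -> n = (p.+1 * s)%N ->
  (0 < s)%N -> (0 < p)%N ->
  let A : 'M[algC]_n := \matrix_(i, j) (f i != f j)%:R in
  (forall c e, char_poly (c%:M + e *: A) =
    ('X - (c + e * 0)%:P) ^+ (n - p.+1) * ('X - (c + e * - s%:R)%:P) ^+ p
    * ('X - (c + e * (p * s)%:R)%:P) ^+ 1)
  /\ (forall i, \sum_j A i j = (p * s)%:R).
Proof.
case: n f => [|n'] f hs hn s0 p0 /=; first by move: hn; nia.
split; [exact: (Am_char hs hn s0 p0) | exact: (rowsum hs hn)].
Qed.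

Lemma prod_list3 (k1 k2 k3 : nat) (x y z : algC) :
  \prod_(l <- nseq k1 x ++ nseq k2 y ++ nseq k3 z) ('X - l%:P) =
  ('X - x%:P) ^+ k1 * ('X - y%:P) ^+ k2 * ('X - z%:P) ^+ k3.
Proof. by rewrite !big_cat !big_nseq /= !iter_mulr_1 mulrA. Qed.

Lemma sum_list3 (F : algC -> algC) (k1 k2 k3 : nat) (x y z : algC) :
  \sum_(l <- nseq k1 x ++ nseq k2 y ++ nseq k3 z) F l = F x *+ k1 + F y *+ k2 + F z *+ k3.
Proof. by rewrite !big_cat !big_nseq /= !iter_addr_0 addrA. Qed.

Unset Implicit Arguments.
Theorem corollary2p4 (gT : finGroupType) (G : {group gT}) (p m : nat) :
  prime p -> #|G| = (p ^ m)%N -> ~~ abelian G -> #|'Z(G)%g| = (p ^ (m - 2))%N ->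
  let k := ((p + 1) * ((p - 1) * p ^ (m - 3) - 1))%N in
  let a : algC := ((p - 1) * p ^ (m - 3))%N%:R in
  let b : algC := ((p - 1) * p ^ (m - 2))%N%:R in
  let c : algC := ((p ^ 2 - 1) * p ^ (m - 3))%N%:R in
  let d : algC := ((p - 1) ^ 2 * p ^ (m - 3))%N%:R in
  let A := nccc_A G in
  let L := nccc_L G in
  let Q := nccc_Q G in
  let Delta := nccc_Delta G in
  [/\ is_spectrum A (nseq k 0 ++ nseq p (- a) ++ nseq 1 b),
      is_spectrum L (nseq 1 0 ++ nseq k b ++ nseq p c),
      is_spectrum Q (nseq k b ++ nseq p d ++ nseq 1 (2 * b))
    & [/\
      (forall s, is_spectrum A s -> \sum_(l <- s) `|l| = 2 * b),
      (forall s, is_spectrum L s -> \sum_(l <- s) `|l - Delta| = 2 * b)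
    & (forall s, is_spectrum Q s -> \sum_(l <- s) `|l - Delta| = 2 * b)]].
Proof.
move=> pr cG nab cZ k a b c d A L Q Delta.
have hm : (2 < m)%N := m_gt2 pr cG nab.
have p1 : (1 < p)%N := prime_gt1 pr.
have p0 : (0 < p)%N := prime_gt0 pr.
have eq2 : (p ^ (m - 2) = p * p ^ (m - 3))%N by rewrite -expnS; congr (_ ^ _)%N; lia.
have eq1 : (p ^ (m - 1) = p * (p * p ^ (m - 3)))%N by rewrite -eq2 -expnS; congr (_ ^ _)%N; lia.
have eq0 : (p ^ m = p * (p * (p * p ^ (m - 3))))%N by rewrite -eq1 -expnS; congr (_ ^ _)%N; lia.
have q0 : (0 < p ^ (m - 3))%N by rewrite expn_gt0 p0.
move: eq0 eq1 eq2 q0; set q := (p ^ (m - 3))%N => eq0 eq1 eq2 q0.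
set s := ((p - 1) * q)%N.
have s0 : (0 < s)%N by rewrite muln_gt0 subn_gt0 p1 q0.
set V := nccc_vertices G.
have hn : nccc_n G = (p.+1 * s)%N.
  have := card_V pr cG nab cZ; rewrite -/V eq0 eq2 /nccc_n -/V => h.
  apply/eqP; rewrite -(eqn_pmul2l p0) h; apply/eqP; rewrite /s; nia.
set f := fun i : 'I_(nccc_n G) => Fc G (enum_val i).
have hs : forall i, (\sum_(j < nccc_n G) (f j == f i))%N = s.
  move=> i; have iV : enum_val i \in V := enum_valP i.
  have [x0 x0n e0] := vertP iV.
  rewrite /f e0 (F_class pr cG nab cZ x0n).
  have := card_part pr cG nab cZ x0n; rewrite eq1 eq2 => h.
  have -> : (\sum_(j < nccc_n G) (Fc G (enum_val j) == ('C_G[x0])%g))%N =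
      #|[set C in nccc_vertices G | Fc G C == ('C_G[x0])%g]|.
    rewrite /nccc_n -(big_enum_val (fun C => (Fc G C == ('C_G[x0])%g) : nat)).
    rewrite -sum1_card [RHS]big_mkcond [LHS]big_mkcond.
    apply: eq_bigr => C _; rewrite in_set.
    by case: (C \in nccc_vertices G); case: (Fc G C == _).
  by apply/eqP; rewrite -(eqn_pmul2l p0) h /s mulnBl mul1n mulnBr.
set M : 'M[algC]_(nccc_n G) := \matrix_(i, j) (f i != f j)%:R.
have eA : nccc_A G = M.
  apply/matrixP => i j; rewrite /nccc_A /M !mxE.
  by rewrite (adjE pr cG nab cZ (enum_valP i) (enum_valP j)).
have [HC HR] := multi_all hs hn s0 p0.
rewrite -/M in HC HR.
have bE : b = (p * s)%:R by rewrite /b /s eq2 mulnCA.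
have aE : a = s%:R by [].
have cE : c = (p * s)%:R + s%:R.
  rewrite /c -natrD; congr (_%:R); rewrite /s; move: p1 q0; clear; nia.
have dE : d = (p * s)%:R - s%:R.
  rewrite /d -natrB ?leq_pmull //; congr (_%:R); rewrite /s; move: p1 q0; clear; nia.
have kE : k = (nccc_n G - p.+1)%N by rewrite /k hn addn1; move: s0; clear; nia.
have nR0 : (nccc_n G)%:R != 0 :> algC by rewrite pnatr_eq0 hn -lt0n muln_gt0 s0.
have DE : nccc_D G = b%:M.
  apply/matrixP => i j; rewrite /nccc_D eA !mxE HR bE //.
have AE : A = 0%:M + 1 *: M.
  rewrite /A eA scale1r; apply/matrixP => i j; rewrite !mxE mul0rn add0r //.
have LE : L = b%:M + (-1) *: M by rewrite /L /nccc_L DE eA scaleN1r.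
have QE : Q = b%:M + 1 *: M by rewrite /Q /nccc_Q DE eA scale1r.
have DeltaE : Delta = b.
  rewrite /Delta /nccc_Delta eA (eq_bigr (fun _ => b)); last by move=> i _; rewrite HR bE.
  by rewrite sumr_const card_ord -[b *+ _]mulr_natr mulfK.
have SA : char_poly A = \prod_(l <- nseq k 0 ++ nseq p (- a) ++ nseq 1 b) ('X - l%:P).
  by rewrite AE HC prod_list3 !mul1r !add0r kE aE bE.
have SL : char_poly L = \prod_(l <- nseq 1 0 ++ nseq k b ++ nseq p c) ('X - l%:P).
  rewrite LE HC prod_list3 kE cE bE.
  have -> : (p * s)%:R + -1 * 0 = (p * s)%:R :> algC by ring.
  have -> : (p * s)%:R + -1 * - s%:R = (p * s)%:R + s%:R :> algC by ring.
  have -> : (p * s)%:R + -1 * (p * s)%:R = 0 :> algC by ring.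
  by rewrite mulrC mulrA.
have SQ : char_poly Q = \prod_(l <- nseq k b ++ nseq p d ++ nseq 1 (2 * b)) ('X - l%:P).
  rewrite QE HC prod_list3 kE dE bE.
  have -> : (p * s)%:R + 1 * 0 = (p * s)%:R :> algC by ring.
  have -> : (p * s)%:R + 1 * - s%:R = (p * s)%:R - s%:R :> algC by ring.
  have -> : (p * s)%:R + 1 * (p * s)%:R = 2 * (p * s)%:R :> algC by ring.
  by [].
split => //; split.
- move=> s1 H.
  rewrite (perm_big _ (prod_XsubC_eq (etrans (esym H) SA))) sum_list3.
  rewrite normr0 mul0rn add0r normrN aE bE !normr_nat natrM -mulr_natl; ring.
- move=> s1 H.
  rewrite (perm_big _ (prod_XsubC_eq (etrans (esym H) SL))) sum_list3 DeltaE cE bE.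
  rewrite sub0r normrN subrr normr0 mul0rn addr0 addrAC subrr add0r !normr_nat.
  rewrite natrM -mulr_natl; ring.
- move=> s1 H.
  rewrite (perm_big _ (prod_XsubC_eq (etrans (esym H) SQ))) sum_list3 DeltaE dE bE.
  rewrite subrr normr0 mul0rn add0r addrAC subrr add0r normrN.
  have -> : 2 * (p * s)%:R - (p * s)%:R = (p * s)%:R :> algC by ring.
  rewrite !normr_nat natrM -mulr_natl; ring.
Qed.
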